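(* Let $n\geq 1$ and let $x_1,\dots,x_n\in(0,\tfrac12]$ be not all equal. With $A_n,G_n,A'_n,G'_n$ as in the context, put $r=\frac{\ln(A'_n/G'_n)}{\ln(A_n/G_n)}$. Then $$\frac{A'_n}{G'_n}<\left(\frac{A_n}{G_n}\right)^{\frac{A'_n-G'_n}{A_n-G_n}-r\ln\sqrt{\frac{A'_nG'_n}{A_nG_n}}}<\left(\frac{A_n}{G_n}\right)^{\frac{A'_n-G'_n}{A_n-G_n}-r\ln\frac{A'_n}{A_n}}<\left(\frac{A_n}{G_n}\right)^{1-r\ln\frac{A'_n}{A_n}}<\frac{A_n}{G_n},$$ $$\frac{A'_n}{G'_n}<\max\left\{\left(\frac{A'_n}{G'_n}\right)^{1+\ln\sqrt{\frac{A'_nG'_n}{A_nG_n}}},\left(\frac{A'_n}{G'_n}\right)^{\frac{A_n-G_n}{A'_n-G'_n}}\right\}<\left(\frac{A'_n}{G'_n}\right)^{\left(1+\ln\sqrt{\frac{A'_nG'_n}{A_nG_n}}\right)\frac{A_n-G_n}{A'_n-G'_n}}<\frac{A_n}{G_n},$$ and $$\frac{{A'_n}^n-{G'_n}^n}{{A_n}^n-{G_n}^n}<\frac{{A'_n}^n{G'_n}^n\ln\frac{A'_n}{G'_n}}{{A_n}^n{G_n}^n\ln\frac{A_n}{G_n}}.$$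
   Context: $A_n=\frac1n\sum_{i=1}^n x_i$ and $G_n=\prod_{i=1}^n x_i^{1/n}$ are the arithmetic and geometric means of $x_1,\dots,x_n$; $A'_n=\frac1n\sum_{i=1}^n(1-x_i)$ and $G'_n=\prod_{i=1}^n(1-x_i)^{1/n}$ are the arithmetic and geometric means of $1-x_1,\dots,1-x_n$. *)

(* Defs.v *)
From Stdlib Require Import Reals Lra.
Open Scope R_scope.

Fixpoint rsum (n : nat) (f : nat -> R) : R :=
  match n with O => 0 | S m => rsum m f + f m end.
Fixpoint rprod (n : nat) (f : nat -> R) : R :=
  match n with O => 1 | S m => rprod m f * f m end.

(* arithmetic and geometric means of x_1..x_n (indexed 0..n-1) *)
Definition AM (n : nat) (x : nat -> R) : R := rsum n x / INR n.
Definition GM (n : nat) (x : nat -> R) : R := Rpower (rprod n x) (1 / INR n).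
Definition AM' (n : nat) (x : nat -> R) : R := AM n (fun i => 1 - x i).
Definition GM' (n : nat) (x : nat -> R) : R := GM n (fun i => 1 - x i).

(* Main.v *)
Require Import Defs.
From Stdlib Require Import Reals Lra Lia.
From Coquelicot Require Import Coquelicot.
Open Scope R_scope.


Lemma mono_strict (f f' : R -> R) a b : a < b ->
  (forall c, a <= c <= b -> is_derive f c (f' c)) ->
  (forall c, a < c < b -> 0 < f' c) -> f a < f b.
Proof.
  intros Hab Hd Hp.
  destruct (MVT_cor2 f f' a b Hab) as [c [Hc Hc2]].
  { intros c Hc. apply is_derive_Reals. auto. }
  specialize (Hp c Hc2). nra.
Qed.

Lemma mono_le (f f' : R -> R) a b : a <= b ->
  (forall c, a <= c <= b -> is_derive f c (f' c)) ->
  (forall c, a < c < b -> 0 <= f' c) -> f a <= f b.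
Proof.
  intros Hab Hd Hp. destruct (Req_dec a b) as [->|Hne]; [lra|].
  destruct (MVT_cor2 f f' a b) as [c [Hc Hc2]]; [lra| |].
  { intros c Hc. apply is_derive_Reals. auto. }
  specialize (Hp c Hc2). nra.
Qed.

Definition ch y := (exp y + exp (- y)) / 2.
Definition sh y := (exp y - exp (- y)) / 2.

Lemma sh_pos y : 0 < y -> 0 < sh y.
Proof. intros. unfold sh. assert (exp (-y) < exp y) by (apply exp_increasing; lra). lra. Qed.

Lemma sh_nonneg y : 0 <= y -> 0 <= sh y.
Proof. intros. destruct (Req_dec y 0) as [->|]. unfold sh. rewrite Ropp_0. lra.
  left; apply sh_pos; lra. Qed.

Lemma ch_ge1 y : 1 <= ch y.
Proof. unfold ch. pose proof (exp_ineq1_le y). pose proof (exp_ineq1_le (-y)). lra. Qed.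

Lemma d_sh y : is_derive sh y (ch y).
Proof. unfold sh, ch. auto_derive; auto. lra. Qed.
Lemma d_ch y : is_derive ch y (sh y).
Proof. unfold sh, ch. auto_derive; auto. lra. Qed.


Lemma sh_ge y : 0 <= y -> y <= sh y.
Proof.
  intros Hy.
  assert (H := mono_le (fun z => sh z - z) (fun z => ch z - 1) 0 y Hy).
  assert (sh 0 = 0) by (unfold sh; rewrite Ropp_0; lra).
  cut (sh 0 - 0 <= sh y - y). lra.
  apply H.
  - intros c _. unfold sh, ch. auto_derive; auto. lra.
  - intros c _. pose proof (ch_ge1 c). lra.
Qed.

Definition gg y := y * ch y - sh y.
Definition ff y := (3 + y*y) * sh y - 3 * y * ch y.

Lemma gg_pos y : 0 < y -> 0 < gg y.
Proof.
  intros Hy.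
  assert (gg 0 = 0) by (unfold gg, sh, ch; rewrite Ropp_0; lra).
  cut (gg 0 < gg y). lra.
  apply (mono_strict gg (fun z => z * sh z)); auto.
  - intros c _. unfold gg, sh, ch. auto_derive; auto. lra.
  - intros c Hc. pose proof (sh_pos c). nra.
Qed.

Lemma gg_nonneg y : 0 <= y -> 0 <= gg y.
Proof. intros Hy. destruct (Req_dec y 0) as [->|]. unfold gg, sh, ch; rewrite Ropp_0; lra.
  left; apply gg_pos; lra. Qed.

Lemma ff_nonneg y : 0 <= y -> 0 <= ff y.
Proof.
  intros Hy.
  assert (ff 0 = 0) by (unfold ff, sh, ch; rewrite Ropp_0; lra).
  cut (ff 0 <= ff y). lra.
  apply (mono_le ff (fun z => z * gg z)); auto.
  - intros c _. unfold ff, gg, sh, ch. auto_derive; auto. lra.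
  - intros c Hc. pose proof (gg_nonneg c). nra.
Qed.


Definition SS v := 2 * sh (v/2) / v.

Lemma SS_mono a b : 0 < a -> a <= b -> SS a <= SS b.
Proof.
  intros Ha Hab.
  apply (mono_le SS (fun v => 2 * gg (v/2) / (v*v))); auto.
  - intros c Hc. unfold SS, gg, sh, ch. auto_derive.
    + lra.
    + unfold Rdiv; field; lra.
  - intros c Hc. pose proof (gg_nonneg (c/2)).
    apply Rmult_le_pos. lra. left; apply Rinv_0_lt_compat; nra.
Qed.

Definition WW v := SS v * exp (- (v*v) / 24).

Lemma WW_anti a b : 0 < a -> a <= b -> WW b <= WW a.
Proof.
  intros Ha Hab.
  cut (- WW a <= - WW b). lra.
  apply (mono_le (fun v => - WW v) (fun v => exp (- (v*v)/24) * ff (v/2) / (6 * (v/2)*(v/2)))); auto.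
  - intros c Hc. unfold WW, SS, ff, sh, ch. auto_derive.
    + lra.
    + unfold Rdiv; field; lra.
  - intros c Hc. pose proof (ff_nonneg (c/2)). pose proof (exp_pos (- (c*c)/24)).
    apply Rmult_le_pos. nra. left; apply Rinv_0_lt_compat; nra.
Qed.

Lemma SS_ge1 v : 0 < v -> 1 <= SS v.
Proof. intros. unfold SS. pose proof (sh_ge (v/2)).
  apply (Rmult_le_reg_r v); [lra|]. field_simplify; [|lra]. lra. Qed.

Lemma SS_lt v : 0 < v -> SS v < exp (v/2) / v.
Proof. intros. unfold SS, sh. pose proof (exp_pos (-(v/2))).
  apply (Rmult_lt_reg_r v); [lra|]. field_simplify; lra. Qed.

Lemma one_m_exp v : 0 < v -> 1 - exp (- v) = v * exp (- (v/2)) * SS v.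
Proof. intros. unfold SS, sh.
  replace (exp (-v)) with (exp (- (v/2)) * exp (- (v/2))).
  2:{ rewrite <- exp_plus. f_equal. lra. }
  replace (exp (- (v/2))) with (/ exp (v/2)) by (rewrite exp_Ropp; auto).
  pose proof (exp_pos (v/2)). field. lra. Qed.


Lemma ln1p_bound L : 0 <= L -> ln (1 + L) <= L * (2 + L) / (2 * (1 + L)).
Proof.
  intros HL. assert (H := sh_ge (ln (1+L))).
  assert (0 <= ln (1 + L)). { rewrite <- ln_1. apply ln_le; lra. }
  specialize (H H0). unfold sh in H. rewrite exp_ln in H by lra.
  rewrite exp_Ropp, exp_ln in H by lra.
  replace (L * (2 + L) / (2 * (1 + L))) with ((1 + L - / (1 + L)) / 2); [lra|].
  field. lra.
Qed.

Lemma core_SS L s t : 0 < t -> t < s -> L > (s - t)/2 -> 2 * t + (s - t) <= 2 * L ->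
  1 + L < exp L * SS t / SS s.
Proof.
  intros Ht Hts HL HL2.
  set (d := s - t). assert (Hdd : d = s - t) by reflexivity. clearbody d.
  pose proof (SS_ge1 t Ht) as St1. pose proof (SS_ge1 s ltac:(lra)) as Ss1.
  destruct (Rle_dec d 3) as [Hd|Hd].
  - pose proof (WW_anti t s Ht ltac:(lra)) as HW. unfold WW in HW.
    set (X := (s*s - t*t)/24).
    assert (Hq : exp (L - X) <= exp L * SS t / SS s).
    { unfold Rminus. rewrite exp_plus, exp_Ropp.
      assert (HX: exp X = exp (- (t*t)/24) / exp (- (s*s)/24)).
      { unfold X. rewrite <- (exp_ln (exp (-(t*t)/24) / exp (-(s*s)/24))).
        2:{ apply Rdiv_lt_0_compat; apply exp_pos. }
        f_equal. rewrite ln_div by apply exp_pos. rewrite !ln_exp. field. }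
      rewrite HX. pose proof (exp_pos (- (t*t)/24)). pose proof (exp_pos (- (s*s)/24)).
      pose proof (exp_pos L).
      apply (Rmult_le_reg_r (SS s * exp (-(t*t)/24))). nra.
      field_simplify; try lra. nra. }
    assert (HXb : X < L * L / (2 * (1 + L))).
    { unfold X. apply (Rmult_lt_reg_r (24 * (1+L))). nra.
      assert (0 < d) by lra.
      assert (s*s - t*t = d * (2*t + d)) by (subst d; ring).
      assert (E: (s * s - t * t) / 24 * (24 * (1 + L)) = (s*s - t*t) * (1 + L)) by field.
      assert (E2: L * L / (2 * (1 + L)) * (24 * (1 + L)) = 12 * (L * L)) by (field; lra).
      rewrite E, E2.
      assert (0 < (L - d/2) * (6 - d)) by (apply Rmult_lt_0_compat; lra).
      assert (d * (1 + L) < 6 * L) by nra.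
      assert ((s*s - t*t) <= d * (2 * L)) by nra.
      nra. }
    pose proof (ln1p_bound L ltac:(lra)).
    assert (ln (1 + L) < L - X).
    { assert (L - L * L / (2 * (1 + L)) = L * (2 + L) / (2 * (1 + L))) by (field; lra). lra. }
    apply Rlt_le_trans with (exp (L - X)); auto.
    rewrite <- (exp_ln (1 + L)) at 1 by lra. apply exp_increasing; auto.
  - pose proof (SS_lt s ltac:(lra)) as Hs.
    pose proof (SS_pos := Rlt_le_trans 0 1 _ Rlt_0_1 Ss1).
    assert (exp L * SS t / SS s > exp L * (s / exp (s/2))).
    { pose proof (exp_pos L). pose proof (exp_pos (s/2)).
      apply Rlt_le_trans with (exp L / SS s).
      - apply Rmult_lt_compat_l; auto.
        apply Rlt_le_trans with (/ SS s).
        + replace (s / exp (s/2)) with (/ (exp (s/2) / s)) by (field; lra).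
          apply Rinv_lt_contravar; auto. apply Rmult_lt_0_compat; auto.
          apply Rdiv_lt_0_compat; lra.
        + lra.
      - unfold Rdiv. rewrite Rmult_assoc. rewrite (Rmult_comm (SS t)). rewrite <- Rmult_assoc.
        assert (0 < exp L * / SS s). { apply Rmult_lt_0_compat; auto. apply Rinv_0_lt_compat; lra. }
        nra. }
    assert (exp L * (s / exp (s/2)) = exp (L - s/2) * s).
    { unfold Rminus. rewrite exp_plus, exp_Ropp. field. apply Rgt_not_eq, exp_pos. }
    assert (L - s/2 >= (L - d/2)/2).
    { lra. }
    pose proof (exp_ineq1_le ((L - d/2)/2)).
    assert (exp ((L - d/2)/2) <= exp (L - s/2)).
    { destruct (Req_dec (L - s/2) ((L-d/2)/2)) as [E|E]; [rewrite E; lra|].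
      left; apply exp_increasing; lra. }
    assert ((1 + (L - d/2)/2) * s >= 1 + L) by (nra).
    nra.
Qed.


Lemma exp_half_ratio s t : exp (- (t/2)) / exp (- (s/2)) = exp ((s - t)/2).
Proof. rewrite <- (exp_ln (exp (- (t/2)) / exp (- (s/2)))).
  2: apply Rdiv_lt_0_compat; apply exp_pos.
  f_equal. rewrite ln_div by apply exp_pos. rewrite !ln_exp. field. Qed.

Lemma core a s t : 0 < t -> t <= a -> t < s ->
  1 + (a + (s-t)/2) < exp a * (1 - exp (-t)) * s / ((1 - exp (-s)) * t).
Proof.
  intros Ht Hta Hts.
  rewrite (one_m_exp t Ht), (one_m_exp s ltac:(lra)).
  pose proof (SS_ge1 t Ht). pose proof (SS_ge1 s ltac:(lra)).
  pose proof (exp_pos (-(t/2))). pose proof (exp_pos (-(s/2))).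
  replace (exp a * (t * exp (- (t / 2)) * SS t) * s / (s * exp (- (s / 2)) * SS s * t))
    with (exp a * (exp (- (t/2)) / exp (- (s/2))) * SS t / SS s) by (field; repeat split; lra).
  rewrite exp_half_ratio, <- exp_plus.
  apply core_SS; lra.
Qed.

Lemma K2 N a s t : 1 <= N -> 0 < a -> 0 < t -> t < s ->
  (1 - exp (- (N * t))) / (1 - exp (- (N * s))) < exp (N * (a + s - t)) * t / s.
Proof.
  intros HN Ha Ht Hts.
  assert (0 < N * t) by nra. assert (N * t < N * s) by nra.
  rewrite (one_m_exp (N*t)), (one_m_exp (N*s)) by lra.
  pose proof (SS_ge1 (N*t) ltac:(lra)). pose proof (SS_ge1 (N*s) ltac:(lra)).
  pose proof (SS_mono (N*t) (N*s) ltac:(lra) ltac:(lra)).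
  pose proof (exp_pos (-(N*t/2))). pose proof (exp_pos (-(N*s/2))).
  replace (N * t * exp (- (N * t / 2)) * SS (N * t) / (N * s * exp (- (N * s / 2)) * SS (N * s)))
    with ((t / s) * (exp (- (N*t/2)) / exp (- (N*s/2))) * (SS (N*t) / SS (N*s))) by (field; repeat split; lra).
  rewrite exp_half_ratio.
  assert (exp ((N * s - N * t) / 2) < exp (N * (a + s - t))) by (apply exp_increasing; nra).
  assert (SS (N * t) / SS (N * s) <= 1).
  { apply (Rmult_le_reg_r (SS (N*s))). lra. field_simplify; lra. }
  assert (0 < t / s) by (apply Rdiv_lt_0_compat; lra).
  pose proof (exp_pos ((N * s - N * t) / 2)).
  assert (0 < SS (N * t) / SS (N * s)) by (apply Rdiv_lt_0_compat; lra).
  replace (exp (N * (a + s - t)) * t / s) with (t / s * exp (N * (a + s - t))) by (field; lra).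
  apply Rle_lt_trans with (t / s * exp ((N * s - N * t) / 2)).
  - rewrite Rmult_assoc. apply Rmult_le_compat_l; [lra|]. nra.
  - apply Rmult_lt_compat_l; lra.
Qed.


Lemma ln_sqrt' y : 0 < y -> ln (sqrt y) = ln y / 2.
Proof. intros Hy. pose proof (sqrt_lt_R0 y Hy).
  assert (ln y = ln (sqrt y * sqrt y)) by (rewrite sqrt_sqrt; lra).
  rewrite ln_mult in H0 by lra. lra. Qed.

Lemma exp_pow' x n : exp x ^ n = exp (INR n * x).
Proof. induction n. simpl. rewrite Rmult_0_l, exp_0. auto.
  rewrite S_INR. simpl. rewrite IHn, <- exp_plus. f_equal. ring. Qed.

Lemma final_abs (n : nat) A G A' G' :
  (1 <= n)%nat -> 0 < G < A -> 0 < G' < A' -> A < A' -> A <= G' ->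
  A' / G' < A / G -> A' - G' < A - G ->
  let r := ln (A' / G') / ln (A / G) in
  let L := ln (sqrt (A' * G' / (A * G))) in
  (A' / G' < Rpower (A / G) ((A' - G') / (A - G) - r * L) /\
   Rpower (A / G) ((A' - G') / (A - G) - r * L)
     < Rpower (A / G) ((A' - G') / (A - G) - r * ln (A' / A)) /\
   Rpower (A / G) ((A' - G') / (A - G) - r * ln (A' / A))
     < Rpower (A / G) (1 - r * ln (A' / A)) /\
   Rpower (A / G) (1 - r * ln (A' / A)) < A / G) /\
  (A' / G' < Rmax (Rpower (A' / G') (1 + L))
                  (Rpower (A' / G') ((A - G) / (A' - G'))) /\
   Rmax (Rpower (A' / G') (1 + L)) (Rpower (A' / G') ((A - G) / (A' - G')))
     < Rpower (A' / G') ((1 + L) * ((A - G) / (A' - G'))) /\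
   Rpower (A' / G') ((1 + L) * ((A - G) / (A' - G'))) < A / G) /\
  (A' ^ n - G' ^ n) / (A ^ n - G ^ n)
    < (A' ^ n * G' ^ n * ln (A' / G')) / (A ^ n * G ^ n * ln (A / G)).
Proof.
  intros Hn HG HG' HAA' HAG' HKF HAlz r L.
  assert (HAG1 : 1 < A / G) by (apply (Rmult_lt_reg_r G); [lra|]; field_simplify; lra).
  assert (HAG2 : 1 < A' / G') by (apply (Rmult_lt_reg_r G'); [lra|]; field_simplify; lra).
  set (s := ln (A / G)) in *. set (t := ln (A' / G')) in *. set (a := ln (A' / A)) in *.
  assert (Hs : 0 < s) by (unfold s; rewrite <- ln_1; apply ln_increasing; lra).
  assert (Ht : 0 < t) by (unfold t; rewrite <- ln_1; apply ln_increasing; lra).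
  assert (Hts : t < s) by (unfold t, s; apply ln_increasing; lra).
  assert (Ha : 0 < a) by (unfold a; rewrite <- ln_1; apply ln_increasing;
     [lra| apply (Rmult_lt_reg_r A); [lra|]; field_simplify; lra]).
  assert (Hta : t <= a).
  { unfold t, a. apply ln_le. apply Rdiv_lt_0_compat; lra.
    apply Rmult_le_compat_l. lra. apply Rinv_le_contravar; lra. }
  assert (es : exp s = A / G) by (unfold s; apply exp_ln; lra).
  assert (et : exp t = A' / G') by (unfold t; apply exp_ln; apply Rdiv_lt_0_compat; lra).
  assert (ea : exp a = A' / A) by (unfold a; apply exp_ln; apply Rdiv_lt_0_compat; lra).
  assert (eG : G = A * exp (- s)) by (rewrite exp_Ropp, es; field; lra).
  assert (eG' : G' = A' * exp (- t)) by (rewrite exp_Ropp, et; field; lra).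
  assert (eA' : A' = A * exp a) by (rewrite ea; field; lra).
  assert (EL : L = a + (s - t) / 2).
  { unfold L. rewrite ln_sqrt'.
    2:{ apply Rdiv_lt_0_compat; apply Rmult_lt_0_compat; lra. }
    unfold s, t, a. rewrite !ln_div, !ln_mult by (try apply Rmult_lt_0_compat; lra). field. }
  assert (Er : r = t / s) by reflexivity.
  clearbody r L.
  set (k1 := (A' - G') / (A - G)).
  assert (Hk1 : k1 = exp a * (1 - exp (- t)) / (1 - exp (- s))).
  { unfold k1. rewrite eG', eG, eA'.
    assert (exp (- s) < 1). { rewrite <- exp_0. apply exp_increasing. lra. }
    field. split; lra. }
  assert (Hk1p : 0 < k1) by (unfold k1; apply Rdiv_lt_0_compat; lra).
  assert (Hk1l : k1 < 1) by (unfold k1; apply (Rmult_lt_reg_r (A - G)); [lra|]; field_simplify; lra).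
  assert (Hkey : t * (1 + L) < k1 * s).
  { pose proof (core a s t Ht Hta Hts) as C. rewrite <- EL in C.
    assert (exp (- s) < 1). { rewrite <- exp_0. apply exp_increasing. lra. }
    replace (exp a * (1 - exp (- t)) * s / ((1 - exp (- s)) * t)) with (k1 * s / t) in C
      by (rewrite Hk1; field; split; lra).
    apply (Rmult_lt_compat_r t) in C; [|lra].
    replace (k1 * s / t * t) with (k1 * s) in C by (field; lra). lra. }
  assert (HL : a < L) by (rewrite EL; lra).
  assert (Einv : (A - G) / (A' - G') = / k1) by (unfold k1; field; lra).
  rewrite Einv.
  unfold Rpower. fold s t a.
  rewrite Er, <- es, <- et.
  assert (Hr : 0 < t / s) by (apply Rdiv_lt_0_compat; lra).
  repeat split.
  - apply exp_increasing. apply (Rmult_lt_reg_r (/ s)). apply Rinv_0_lt_compat; lra.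
    field_simplify; try lra. apply (Rmult_lt_reg_r s); [lra|]. field_simplify; lra.
  - apply exp_increasing. apply Rmult_lt_compat_r; [lra|]. nra.
  - apply exp_increasing. apply Rmult_lt_compat_r; [lra|]. lra.
  - apply exp_increasing. assert (0 < t / s * a) by nra. nra.
  - apply Rlt_le_trans with (exp ((1 + L) * t)); [|apply Rmax_l].
    apply exp_increasing. nra.
  - assert (1 < / k1). { rewrite <- Rinv_1. apply Rinv_lt_contravar; lra. }
    assert (0 < (1 + L) * t) by nra.
    apply Rmax_lub_lt; apply exp_increasing.
    + assert (0 < (1 + L) * t * (/ k1 - 1)) by nra. nra.
    + assert (0 < / k1 * t * L) by (apply Rmult_lt_0_compat; [apply Rmult_lt_0_compat|]; lra). nra.
  - apply exp_increasing. apply (Rmult_lt_reg_r k1); [lra|].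
    replace ((1 + L) * / k1 * t * k1) with (t * (1 + L)) by (field; lra). lra.
  -
    assert (HN : 1 <= INR n) by (replace 1 with (INR 1) by reflexivity; apply le_INR; auto).
    pose proof (K2 (INR n) a s t HN Ha Ht Hts) as K.
    rewrite eG, eG', !Rpow_mult_distr, !exp_pow'.
    set (P := A ^ n). set (P' := A' ^ n).
    assert (HP : 0 < P) by (apply pow_lt; lra).
    assert (HP' : P' = P * exp (INR n * a)) by (unfold P', P; rewrite eA', Rpow_mult_distr, exp_pow'; auto).
    assert (E1: exp (INR n * (a + s - t)) = exp (INR n * a) * exp (INR n * - t) / exp (INR n * - s)).
    { rewrite <- exp_plus. rewrite <- (exp_ln (exp (INR n * a + INR n * - t) / exp (INR n * - s))).
      2: apply Rdiv_lt_0_compat; apply exp_pos.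
      f_equal. rewrite ln_div by apply exp_pos. rewrite !ln_exp. ring. }
    rewrite E1 in K.
    replace (- (INR n * t)) with (INR n * - t) in K by ring.
    replace (- (INR n * s)) with (INR n * - s) in K by ring.
    assert (exp (INR n * - s) < 1). { rewrite <- exp_0. apply exp_increasing. nra. }
    pose proof (exp_pos (INR n * - s)). pose proof (exp_pos (INR n * - t)). pose proof (exp_pos (INR n * a)).
    assert (0 < P * (1 - exp (INR n * - s))) by (apply Rmult_lt_0_compat; lra).
    rewrite HP'.
    replace ((P * exp (INR n * a) - P * exp (INR n * a) * exp (INR n * - t)) / (P - P * exp (INR n * - s)))
      with (exp (INR n * a) * ((1 - exp (INR n * - t)) / (1 - exp (INR n * - s)))) by (field; repeat split; nra).
    replace (P * exp (INR n * a) * (P * exp (INR n * a) * exp (INR n * - t)) * t /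
       (P * (P * exp (INR n * - s)) * s)) with
      (exp (INR n * a) * (exp (INR n * a) * exp (INR n * - t) / exp (INR n * - s) * t / s)) by (field; repeat split; nra).
    apply Rmult_lt_compat_l; lra.
Qed.


Lemma rsum_ext n f g : (forall i, (i < n)%nat -> f i = g i) -> rsum n f = rsum n g.
Proof. induction n; intros H; simpl; auto. rewrite IHn by (intros; apply H; lia). rewrite H by lia. auto. Qed.

Lemma rsum_plus n f g : rsum n (fun i => f i + g i) = rsum n f + rsum n g.
Proof. induction n; simpl; [lra|]. rewrite IHn. lra. Qed.

Lemma rsum_scal n c f : rsum n (fun i => c * f i) = c * rsum n f.
Proof. induction n; simpl; [lra|]. rewrite IHn. lra. Qed.

Lemma rsum_const n c : rsum n (fun _ => c) = INR n * c.
Proof. induction n; simpl; [lra|]. rewrite IHn. destruct n; simpl; lra. Qed.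

Lemma rsum_le n f g : (forall i, (i < n)%nat -> f i <= g i) -> rsum n f <= rsum n g.
Proof. induction n; intros H; simpl; [lra|]. pose proof (IHn (fun i Hi => H i ltac:(lia))).
  pose proof (H n ltac:(lia)). lra. Qed.

Lemma rsum_lt n f g k : (k < n)%nat -> (forall i, (i < n)%nat -> f i <= g i) -> f k < g k ->
  rsum n f < rsum n g.
Proof. induction n; intros Hk H Hfk; [lia|]. simpl.
  destruct (Nat.eq_dec k n) as [->|Hne].
  - pose proof (rsum_le n f g (fun i Hi => H i ltac:(lia))). lra.
  - pose proof (IHn ltac:(lia) (fun i Hi => H i ltac:(lia)) Hfk). pose proof (H n ltac:(lia)). lra.
Qed.

Lemma rprod_pos n f : (forall i, (i < n)%nat -> 0 < f i) -> 0 < rprod n f.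
Proof. induction n; intros H; simpl; [lra|]. apply Rmult_lt_0_compat. apply IHn; intros; apply H; lia. apply H; lia. Qed.

Lemma ln_rprod n f : (forall i, (i < n)%nat -> 0 < f i) -> ln (rprod n f) = rsum n (fun i => ln (f i)).
Proof. induction n; intros H; simpl. apply ln_1.
  rewrite ln_mult. rewrite IHn by (intros; apply H; lia). auto.
  apply rprod_pos; intros; apply H; lia. apply H; lia. Qed.

Lemma GM_exp n f : (1 <= n)%nat -> (forall i, (i < n)%nat -> 0 < f i) ->
  GM n f = exp (rsum n (fun i => ln (f i)) / INR n).
Proof. intros Hn H. unfold GM, Rpower. rewrite ln_rprod by auto. f_equal.
  assert (0 < INR n) by (apply lt_0_INR; lia). field. lra. Qed.

Lemma is_derive_rsum n (f : nat -> R -> R) (f' : nat -> R -> R) th :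
  (forall i, (i < n)%nat -> is_derive (f i) th (f' i th)) ->
  is_derive (fun y => rsum n (fun i => f i y)) th (rsum n (fun i => f' i th)).
Proof.
  induction n; intros H; simpl.
  - apply is_derive_Reals; apply derivable_pt_lim_const.
  - apply is_derive_Reals. apply (derivable_pt_lim_plus (fun y => rsum n (fun i => f i y)) (f n)); apply is_derive_Reals. apply IHn. intros; apply H; lia. apply H; lia.
Qed.


Lemma dmul f g x df dg : is_derive f x df -> is_derive g x dg ->
  is_derive (fun y => f y * g y) x (df * g x + f x * dg).
Proof. intros Hf Hg. apply is_derive_Reals. apply is_derive_Reals in Hf, Hg.
  apply (derivable_pt_lim_mult f g x df dg Hf Hg). Qed.

Lemma dplus f g x df dg : is_derive f x df -> is_derive g x dg ->
  is_derive (fun y => f y + g y) x (df + dg).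
Proof. intros Hf Hg. apply is_derive_Reals. apply is_derive_Reals in Hf, Hg.
  apply (derivable_pt_lim_plus f g x df dg Hf Hg). Qed.

Lemma dexp f x df : is_derive f x df -> is_derive (fun y => exp (f y)) x (exp (f x) * df).
Proof. intros Hf. apply is_derive_Reals. apply is_derive_Reals in Hf.
  replace (exp (f x) * df) with (exp (f x) * df) by ring.
  pose proof (derivable_pt_lim_comp f exp x df (exp (f x)) Hf (derivable_pt_lim_exp _)) as H.
  exact H. Qed.

Lemma dscal c f x df : is_derive f x df -> is_derive (fun y => c * f y) x (c * df).
Proof. intros Hf. apply is_derive_Reals. apply is_derive_Reals in Hf.
  apply (derivable_pt_lim_scal f c x df Hf). Qed.

Lemma dcompneg (f : R -> R) x df : is_derive f (- x) df -> is_derive (fun y => f (- y)) x (- df).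
Proof. intros Hf. apply is_derive_Reals. apply is_derive_Reals in Hf.
  replace (- df) with (df * -1) by ring.
  apply (derivable_pt_lim_comp (fun y => - y) f x (-1) df).
  - apply is_derive_Reals. auto_derive; auto.
  - auto. Qed.

Lemma dext (f g : R -> R) (x d d' : R) : (forall y, f y = g y) -> d = d' -> is_derive f x d -> is_derive g x d'.
Proof. intros H <- Hf. apply (is_derive_ext f g x d H Hf). Qed.



Definition ok (n : nat) (e : nat -> R) th := forall i, (i < n)%nat -> 0 < 1/2 - th * e i.
Definition wf (e : nat -> R) i th := e i / (1/2 - th * e i).
Definition Sln (n : nat) (e : nat -> R) th := rsum n (fun i => ln (1/2 - th * e i)).
Definition S1 (n : nat) (e : nat -> R) th := rsum n (fun i => wf e i th).
Definition S2 (n : nat) (e : nat -> R) th := rsum n (fun i => wf e i th * wf e i th).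
Definition S3 (n : nat) (e : nat -> R) th := rsum n (fun i => wf e i th * wf e i th * wf e i th).
Definition NN (n : nat) := INR n.
Definition zeta (n : nat) (e : nat -> R) th := exp (Sln n e th / NN n).
Definition F1 (n : nat) (e : nat -> R) th := - (zeta n e th * (S1 n e th / NN n)).
Definition F2 (n : nat) (e : nat -> R) th := zeta n e th * ((S1 n e th / NN n) * (S1 n e th / NN n) - S2 n e th / NN n).
Definition F3 (n : nat) (e : nat -> R) th := zeta n e th * (- ((S1 n e th / NN n) * (S1 n e th / NN n) * (S1 n e th / NN n))
   + 3 * (S1 n e th / NN n) * (S2 n e th / NN n) - 2 * (S3 n e th / NN n)).

Lemma d_Sln n e th : ok n e th -> is_derive (Sln n e) th (- S1 n e th).
Proof. intros Hok. unfold Sln, S1.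
  rewrite <- (Rmult_1_l (rsum n _)), Ropp_mult_distr_l, <- rsum_scal.
  apply (is_derive_rsum n (fun i y => ln (1/2 - y * e i)) (fun i y => -1 * wf e i y)).
  intros i Hi. specialize (Hok i Hi). unfold wf. auto_derive. lra. field. lra. Qed.

Lemma d_S1 n e th : ok n e th -> is_derive (S1 n e) th (S2 n e th).
Proof. intros Hok. unfold S1, S2.
  apply (is_derive_rsum n (fun i y => wf e i y) (fun i y => wf e i y * wf e i y)).
  intros i Hi. specialize (Hok i Hi). unfold wf. auto_derive. lra. field. lra. Qed.

Lemma d_S2 n e th : ok n e th -> is_derive (S2 n e) th (2 * S3 n e th).
Proof. intros Hok. unfold S2, S3. rewrite <- rsum_scal.
  apply (is_derive_rsum n (fun i y => wf e i y * wf e i y) (fun i y => 2 * (wf e i y * wf e i y * wf e i y))).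
  intros i Hi. specialize (Hok i Hi). unfold wf. auto_derive. lra. field. lra. Qed.

Lemma d_zeta n e th : ok n e th -> is_derive (zeta n e) th (F1 n e th).
Proof. intros Hok. unfold F1, zeta.
  apply (dext (fun y => exp (/ NN n * Sln n e y)) _ _ (exp (/NN n * Sln n e th) * (/NN n * - S1 n e th))).
  - intros y. unfold Rdiv. rewrite Rmult_comm. auto.
  - replace (/NN n * Sln n e th) with (Sln n e th / NN n) by (unfold Rdiv; ring). unfold Rdiv. ring.
  - apply (dexp (fun y => /NN n * Sln n e y)). apply (dscal (/NN n) (Sln n e)). apply d_Sln; auto. Qed.

Lemma d_F1 n e th : ok n e th -> is_derive (F1 n e) th (F2 n e th).
Proof. intros Hok. unfold F1.
  apply (dext (fun y => -1 * (zeta n e y * (/NN n * S1 n e y))) _ _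
     (-1 * (F1 n e th * (/NN n * S1 n e th) + zeta n e th * (/NN n * S2 n e th)))).
  - intros y. unfold Rdiv. ring.
  - unfold F1, F2. unfold Rdiv. ring.
  - apply (dscal (-1) (fun y => zeta n e y * (/NN n * S1 n e y))).
    apply (dmul (zeta n e) (fun y => /NN n * S1 n e y)). apply d_zeta; auto. apply (dscal (/NN n) (S1 n e)). apply d_S1; auto. Qed.

Lemma d_F2 n e th : ok n e th -> is_derive (F2 n e) th (F3 n e th).
Proof. intros Hok. unfold F2.
  apply (dext (fun y => zeta n e y * ((/NN n * S1 n e y) * (/NN n * S1 n e y) + (-1) * (/NN n * S2 n e y))) _ _
     (F1 n e th * ((/NN n * S1 n e th) * (/NN n * S1 n e th) + (-1) * (/NN n * S2 n e th)) +
      zeta n e th * (((/NN n * S2 n e th) * (/NN n * S1 n e th) + (/NN n * S1 n e th) * (/NN n * S2 n e th)) + (-1) * (/NN n * (2 * S3 n e th))))).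
  - intros y. unfold Rdiv. ring.
  - unfold F1, F3. unfold Rdiv. ring.
  - apply (dmul (zeta n e) (fun y => (/NN n * S1 n e y) * (/NN n * S1 n e y) + (-1) * (/NN n * S2 n e y))). apply d_zeta; auto.
    apply (dplus (fun y => (/NN n * S1 n e y) * (/NN n * S1 n e y)) (fun y => (-1) * (/NN n * S2 n e y))).
    apply (dmul (fun y => /NN n * S1 n e y) (fun y => /NN n * S1 n e y)); apply (dscal (/NN n) (S1 n e)); apply d_S1; auto.
    apply (dscal (-1) (fun y => /NN n * S2 n e y)). apply (dscal (/NN n) (S2 n e)). apply d_S2; auto. Qed.



Lemma rsum_nonneg n f : (forall i, (i < n)%nat -> 0 <= f i) -> 0 <= rsum n f.
Proof. intros H. pose proof (rsum_le n (fun _ => 0) f H). rewrite rsum_const in H0. lra. Qed.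

Lemma rsum_pos n f k : (k < n)%nat -> (forall i, (i < n)%nat -> 0 <= f i) -> 0 < f k -> 0 < rsum n f.
Proof. intros Hk H Hf. pose proof (rsum_lt n (fun _ => 0) f k Hk H Hf). rewrite rsum_const in H0. lra. Qed.

Lemma F3_neg n e th : (1 <= n)%nat -> (forall i, (i < n)%nat -> 0 <= e i) -> ok n e th ->
  (exists i j, (i < n)%nat /\ (j < n)%nat /\ e i <> e j) -> F3 n e th < 0.
Proof.
  intros Hn He Hok [i [j [Hi [Hj Hij]]]].
  assert (HN : 0 < NN n) by (unfold NN; apply lt_0_INR; lia).
  set (mu := S1 n e th / NN n).
  assert (Hw : forall k, (k < n)%nat -> 0 <= wf e k th).
  { intros k Hk. unfold wf. pose proof (Hok k Hk). pose proof (He k Hk).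
    apply Rmult_le_pos; auto. left; apply Rinv_0_lt_compat; auto. }
  assert (Hmu : 0 <= mu).
  { unfold mu, S1. apply Rmult_le_pos. apply rsum_nonneg; auto. left; apply Rinv_0_lt_compat; auto. }
  assert (Hid : rsum n (fun k => (wf e k th - mu) * (wf e k th - mu) * (mu + 2 * wf e k th))
     = 2 * S3 n e th - 3 * mu * S2 n e th + NN n * (mu * mu * mu)).
  { rewrite (rsum_ext n _ (fun k => (2 * (wf e k th * wf e k th * wf e k th) + (-3 * mu) * (wf e k th * wf e k th)) + mu * mu * mu)).
    2:{ intros; ring. }
    rewrite rsum_plus, rsum_plus, rsum_scal, rsum_scal, rsum_const. unfold S3, S2, NN. ring. }
  assert (Hpos : 0 < rsum n (fun k => (wf e k th - mu) * (wf e k th - mu) * (mu + 2 * wf e k th))).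
  { assert (Hwij : wf e i th <> wf e j th).
    { unfold wf. intros Heq. pose proof (Hok i Hi). pose proof (Hok j Hj).
      apply Hij. apply (Rmult_eq_compat_r ((1/2 - th * e i) * (1/2 - th * e j))) in Heq.
      field_simplify in Heq; try lra. }
    assert (exists k, (k < n)%nat /\ wf e k th <> mu) as [k [Hk Hkm]].
    { destruct (Req_dec (wf e i th) mu). exists j; split; auto. congruence. exists i; auto. }
    apply (rsum_pos n _ k Hk).
    - intros m Hm. pose proof (Hw m Hm). apply Rmult_le_pos. apply Rle_0_sqr. lra.
    - pose proof (Hw k Hk). apply Rmult_lt_0_compat.
      + assert (wf e k th - mu <> 0) by lra. pose proof (Rsqr_pos_lt _ H0). unfold Rsqr in H1. lra.
      + destruct (Req_dec (wf e k th) 0); [|lra]. assert (mu <> 0) by lra. lra. }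
  unfold F3. fold mu.
  assert (Heq : - (mu * mu * mu) + 3 * mu * (S2 n e th / NN n) - 2 * (S3 n e th / NN n)
     = - (rsum n (fun k => (wf e k th - mu) * (wf e k th - mu) * (mu + 2 * wf e k th)) / NN n)).
  { rewrite Hid. field. lra. }
  rewrite Heq. pose proof (exp_pos (Sln n e th / NN n)). unfold zeta.
  assert (0 < rsum n (fun k => (wf e k th - mu) * (wf e k th - mu) * (mu + 2 * wf e k th)) / NN n)
    by (apply Rdiv_lt_0_compat; auto).
  nra.
Qed.


Lemma alzer_zeta n e : (1 <= n)%nat -> (forall i, (i < n)%nat -> 0 <= e i < 1/2) ->
  (exists i j, (i < n)%nat /\ (j < n)%nat /\ e i <> e j) ->
  0 < zeta n e (-1) - zeta n e 1 + 2 * F1 n e 0.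
Proof.
  intros Hn He Hne.
  assert (Hok : forall th, -1 <= th <= 1 -> ok n e th).
  { intros th Hth i Hi. pose proof (He i Hi). nra. }
  assert (Ha : forall u v, -1 <= u -> u < v -> v <= 1 -> F2 n e v < F2 n e u).
  { intros u v Hu Huv Hv.
    cut (- F2 n e u < - F2 n e v). lra.
    apply (mono_strict (fun y => - F2 n e y) (fun y => - F3 n e y)); auto.
    - intros c Hc. apply (dext (fun y => -1 * F2 n e y) _ _ (-1 * F3 n e c)).
      intros; ring. ring. apply (dscal (-1) (F2 n e)). apply d_F2. apply Hok; lra.
    - intros c Hc. pose proof (F3_neg n e c Hn (fun i Hi => proj1 (He i Hi)) (Hok c ltac:(lra)) Hne). lra. }
  set (R := fun th => 2 * F1 n e 0 - F1 n e th - F1 n e (- th)).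
  assert (HR : forall th, 0 < th <= 1 -> 0 < R th).
  { intros th Hth.
    assert (R 0 = 0) by (unfold R; rewrite Ropp_0; ring).
    cut (R 0 < R th). lra.
    apply (mono_strict R (fun y => - F2 n e y + F2 n e (- y))); [lra| |].
    - intros c Hc. unfold R.
      apply (dext (fun y => (2 * F1 n e 0 + -1 * F1 n e y) + -1 * F1 n e (- y)) _ _
         ((0 + -1 * F2 n e c) + -1 * (- F2 n e (- c)))).
      intros; ring. ring.
      apply (dplus (fun y => 2 * F1 n e 0 + -1 * F1 n e y) (fun y => -1 * F1 n e (- y))).
      apply (dplus (fun _ => 2 * F1 n e 0) (fun y => -1 * F1 n e y)).
      apply is_derive_Reals; apply derivable_pt_lim_const.
      apply (dscal (-1) (F1 n e)). apply d_F1. apply Hok; lra.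
      apply (dscal (-1) (fun y => F1 n e (- y))). apply (dcompneg (F1 n e)). apply d_F1. apply Hok; lra.
    - intros c Hc. pose proof (Ha (- c) c ltac:(lra) ltac:(lra) ltac:(lra)). lra. }
  set (P := fun th => zeta n e (- th) - zeta n e th + 2 * th * F1 n e 0).
  assert (P 0 = 0) by (unfold P; rewrite Ropp_0; ring).
  assert (P 0 < P 1).
  { apply (mono_strict P R); [lra| |].
    - intros c Hc. unfold P, R.
      apply (dext (fun y => (zeta n e (- y) + -1 * zeta n e y) + (2 * F1 n e 0) * y) _ _
         ((- F1 n e (- c) + -1 * F1 n e c) + (2 * F1 n e 0) * 1)).
      intros; ring. ring.
      apply (dplus (fun y => zeta n e (- y) + -1 * zeta n e y) (fun y => (2 * F1 n e 0) * y)).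
      apply (dplus (fun y => zeta n e (- y)) (fun y => -1 * zeta n e y)).
      apply (dcompneg (zeta n e)). apply d_zeta. apply Hok; lra.
      apply (dscal (-1) (zeta n e)). apply d_zeta. apply Hok; lra.
      apply (dscal (2 * F1 n e 0) (fun y => y)). apply is_derive_Reals; apply derivable_pt_lim_id.
    - intros c Hc. apply HR; lra. }
  unfold P in H0. rewrite Ropp_0 in H0. replace (- (1)) with (-1) in H0 by ring. lra.
Qed.


Lemma ln_lin y : 0 < y -> ln y <= y - 1.
Proof. intros. pose proof (exp_ineq1_le (ln y)). rewrite exp_ln in H0; lra. Qed.

Lemma ln_lin_strict y : 0 < y -> y <> 1 -> ln y < y - 1.
Proof. intros. assert (ln y <> 0). { intros E. apply H0. rewrite <- (exp_ln y), E by auto. apply exp_0. }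
  pose proof (exp_ineq1 (ln y) H1). rewrite exp_ln in H2; lra. Qed.

Lemma amgm n y : (1 <= n)%nat -> (forall i, (i < n)%nat -> 0 < y i) ->
  (exists k, (k < n)%nat /\ y k <> AM n y) -> GM n y < AM n y.
Proof.
  intros Hn Hy [k [Hk Hyk]].
  assert (HN : 0 < INR n) by (apply lt_0_INR; lia).
  set (A := AM n y).
  assert (HA : 0 < A). { unfold A, AM. apply Rdiv_lt_0_compat; auto. apply (rsum_pos n y k Hk); auto. intros; left; auto. }
  rewrite GM_exp by auto.
  assert (Hs : rsum n (fun i => ln (y i) - ln A) < rsum n (fun i => y i / A - 1)).
  { apply (rsum_lt n _ _ k Hk).
    - intros i Hi. rewrite <- ln_div by auto. apply ln_lin. apply Rdiv_lt_0_compat; auto.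
    - rewrite <- ln_div by auto. apply ln_lin_strict. apply Rdiv_lt_0_compat; auto.
      intros E. apply Hyk. fold A. apply (Rmult_eq_compat_r A) in E. field_simplify in E; lra. }
  rewrite (rsum_ext n (fun i => ln (y i) - ln A) (fun i => ln (y i) + (-1) * ln A)) in Hs by (intros; ring).
  rewrite (rsum_ext n (fun i => y i / A - 1) (fun i => (/A) * y i + -1)) in Hs by (intros; unfold Rdiv; ring).
  rewrite !rsum_plus, rsum_scal, !rsum_const in Hs.
  assert (rsum n y = A * INR n) by (unfold A, AM; field; lra).
  rewrite (rsum_scal n (/A) y) in Hs. rewrite H in Hs.
  apply Rlt_le_trans with (exp (ln A)); [|rewrite exp_ln; lra]. apply exp_increasing.
  replace (/ A * (A * INR n)) with (INR n) in Hs by (field; lra).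
  apply (Rmult_lt_reg_r (INR n)); auto. unfold Rdiv. rewrite Rmult_assoc, Rinv_l by lra. lra.
Qed.

Definition Hf y := ln (1 - y) - ln y.

Lemma Hf_deriv y : 0 < y < 1 -> is_derive Hf y (- / (y * (1 - y))).
Proof. intros. unfold Hf. auto_derive. lra. field. lra. Qed.

Lemma Hf_tan c y : 0 < c <= 1/2 -> 0 < y <= 1/2 -> y <> c ->
  Hf c - (y - c) / (c * (1 - c)) < Hf y.
Proof.
  intros Hc Hy Hyc.
  destruct (Rlt_dec c y) as [Hlt|Hge].
  - destruct (MVT_cor2 Hf (fun z => - / (z * (1 - z))) c y Hlt) as [xi [E Hxi]].
    { intros z Hz. apply is_derive_Reals. apply Hf_deriv. lra. }
    assert (c * (1 - c) < xi * (1 - xi)) by nra.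
    assert (/ (xi * (1 - xi)) < / (c * (1 - c))) by (apply Rinv_lt_contravar; nra).
    assert (Hf y = Hf c + - / (xi * (1 - xi)) * (y - c)) by lra.
    rewrite H1. unfold Rdiv. nra.
  - assert (y < c) by lra.
    destruct (MVT_cor2 Hf (fun z => - / (z * (1 - z))) y c H) as [xi [E Hxi]].
    { intros z Hz. apply is_derive_Reals. apply Hf_deriv. lra. }
    assert (xi * (1 - xi) < c * (1 - c)) by nra.
    assert (/ (c * (1 - c)) < / (xi * (1 - xi))) by (apply Rinv_lt_contravar; nra).
    assert (Hf y = Hf c - - / (xi * (1 - xi)) * (c - y)) by lra.
    rewrite H2. unfold Rdiv. nra.
Qed.


Theorem theorem4p1 (n : nat) (x : nat -> R) :
  (1 <= n)%nat ->
  (forall i, (i < n)%nat -> 0 < x i <= 1/2) ->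
  (exists i j, (i < n)%nat /\ (j < n)%nat /\ x i <> x j) ->
  let A := AM n x in let G := GM n x in
  let A' := AM' n x in let G' := GM' n x in
  let r := ln (A' / G') / ln (A / G) in
  let L := ln (sqrt (A' * G' / (A * G))) in
  (A' / G' < Rpower (A / G) ((A' - G') / (A - G) - r * L) /\
   Rpower (A / G) ((A' - G') / (A - G) - r * L)
     < Rpower (A / G) ((A' - G') / (A - G) - r * ln (A' / A)) /\
   Rpower (A / G) ((A' - G') / (A - G) - r * ln (A' / A))
     < Rpower (A / G) (1 - r * ln (A' / A)) /\
   Rpower (A / G) (1 - r * ln (A' / A)) < A / G) /\
  (A' / G' < Rmax (Rpower (A' / G') (1 + L))
                  (Rpower (A' / G') ((A - G) / (A' - G'))) /\
   Rmax (Rpower (A' / G') (1 + L)) (Rpower (A' / G') ((A - G) / (A' - G')))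
     < Rpower (A' / G') ((1 + L) * ((A - G) / (A' - G'))) /\
   Rpower (A' / G') ((1 + L) * ((A - G) / (A' - G'))) < A / G) /\
  (A' ^ n - G' ^ n) / (A ^ n - G ^ n)
    < (A' ^ n * G' ^ n * ln (A' / G')) / (A ^ n * G ^ n * ln (A / G)).
Proof.
  intros Hn Hx Hne.
  assert (HN : 0 < INR n) by (apply lt_0_INR; lia).
  assert (Hx1 : forall i, (i < n)%nat -> 0 < 1 - x i) by (intros i Hi; pose proof (Hx i Hi); lra).
  assert (EA' : AM' n x = 1 - AM n x).
  { unfold AM', AM.
    rewrite (rsum_ext n (fun i => 1 - x i) (fun i => 1 + (-1) * x i)) by (intros; ring).
    rewrite rsum_plus, rsum_scal, rsum_const. field. lra. }
  assert (ElnG : GM n x = exp (rsum n (fun i => ln (x i)) / INR n))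
    by (apply GM_exp; auto; intros i Hi; apply Hx; auto).
  assert (ElnG' : GM' n x = exp (rsum n (fun i => ln (1 - x i)) / INR n))
    by (apply (GM_exp n (fun i => 1 - x i)); auto).
  destruct Hne as [i [j [Hi [Hj Hij]]]].
  assert (Hk : exists k, (k < n)%nat /\ x k <> AM n x).
  { destruct (Req_dec (x i) (AM n x)). exists j; split; auto. congruence. exists i; auto. }
  destruct Hk as [k [Hk Hxk]].
  assert (Hm : exists m, (m < n)%nat /\ x m < 1/2).
  { pose proof (Hx i Hi). pose proof (Hx j Hj).
    destruct (Rlt_dec (x i) (1/2)). exists i; auto. exists j; split; auto. lra. }
  destruct Hm as [m [Hm Hxm]].
  assert (HAhalf : AM n x < 1/2).
  { unfold AM. apply (Rmult_lt_reg_r (INR n)); auto.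
    unfold Rdiv. rewrite Rmult_assoc, Rinv_l, Rmult_1_r by lra.
    pose proof (rsum_lt n x (fun _ => 1/2) m Hm (fun i Hi => proj2 (Hx i Hi)) Hxm).
    rewrite rsum_const in H. lra. }
  assert (HApos : 0 < AM n x).
  { unfold AM. apply Rdiv_lt_0_compat; auto. apply (rsum_pos n x k Hk). intros i0 Hi0; left; apply (Hx i0 Hi0). apply (Hx k Hk). }
  assert (HG : 0 < GM n x) by (rewrite ElnG; apply exp_pos).
  assert (HG' : 0 < GM' n x) by (rewrite ElnG'; apply exp_pos).
  assert (HGA : GM n x < AM n x).
  { apply amgm; [auto | intros i0 Hi0; apply (Hx i0 Hi0) | exists k; auto]. }
  assert (HGA' : GM' n x < AM' n x).
  { apply (amgm n (fun i => 1 - x i)); auto. exists k; split; auto.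
    change (AM n (fun i => 1 - x i)) with (AM' n x). rewrite EA'. lra. }
  assert (HAG' : AM n x <= GM' n x).
  { rewrite ElnG'. apply Rle_trans with (exp (ln (1/2))). rewrite exp_ln; lra.
    destruct (Req_dec (ln (1/2)) (rsum n (fun i => ln (1 - x i)) / INR n)) as [E|E]; [rewrite E; lra|].
    left. apply exp_increasing.
    assert (rsum n (fun _ => ln (1/2)) <= rsum n (fun i => ln (1 - x i))).
    { apply rsum_le. intros i0 Hi0. apply ln_le. lra. pose proof (Hx i0 Hi0); lra. }
    rewrite rsum_const in H.
    assert (ln (1/2) <= rsum n (fun i => ln (1 - x i)) / INR n).
    { apply (Rmult_le_reg_r (INR n)); auto. unfold Rdiv. rewrite Rmult_assoc, Rinv_l, Rmult_1_r by lra. lra. }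
    lra. }
  assert (HKF : AM' n x / GM' n x < AM n x / GM n x).
  { set (c := AM n x) in *.
    assert (Hs : rsum n (fun i => Hf c - (x i - c) / (c * (1 - c))) < rsum n (fun i => Hf (x i))).
    { apply (rsum_lt n _ _ k Hk).
      - intros i0 Hi0. destruct (Req_dec (x i0) c) as [E|E].
        + rewrite E. unfold Rdiv. rewrite Rminus_diag, Rmult_0_l, Rminus_0_r. lra.
        + left. apply Hf_tan; [lra | apply (Hx i0 Hi0) | auto].
      - apply Hf_tan; [lra | apply (Hx k Hk) | auto]. }
    rewrite (rsum_ext n (fun i => Hf c - (x i - c) / (c * (1 - c)))
        (fun i => (Hf c + c / (c * (1 - c))) + (- / (c * (1 - c))) * x i)) in Hs by (intros; field; lra).
    rewrite rsum_plus, rsum_scal, rsum_const in Hs.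
    assert (rsum n x = c * INR n) by (unfold c, AM; field; lra).
    rewrite H in Hs.
    unfold Hf in Hs. rewrite (rsum_ext n _ (fun i => ln (1 - x i) + (-1) * ln (x i))) in Hs by (intros; ring).
    rewrite rsum_plus, rsum_scal in Hs.
    assert (Hlt : ln (1 - c) - ln c < rsum n (fun i => ln (1 - x i)) / INR n - rsum n (fun i => ln (x i)) / INR n).
    { replace ((ln (1 - c) - ln c + c / (c * (1 - c))) * INR n + - / (c * (1 - c)) * (c * INR n))
        with ((ln (1 - c) - ln c) * INR n) in Hs by (field; lra).
      apply (Rmult_lt_reg_r (INR n)); auto.
      replace ((rsum n (fun i => ln (1 - x i)) / INR n - rsum n (fun i => ln (x i)) / INR n) * INR n)
        with (rsum n (fun i => ln (1 - x i)) + -1 * rsum n (fun i => ln (x i))) by (field; lra). lra. }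
    rewrite EA'. apply ln_lt_inv. apply Rdiv_lt_0_compat; lra. apply Rdiv_lt_0_compat; lra.
    rewrite !ln_div by lra. rewrite ElnG, ElnG', !ln_exp. lra. }
  assert (HAlz : AM' n x - GM' n x < AM n x - GM n x).
  { set (e := fun i => 1/2 - x i).
    assert (He : forall i, (i < n)%nat -> 0 <= e i < 1/2) by (intros i0 Hi0; unfold e; pose proof (Hx i0 Hi0); lra).
    assert (Hne : exists i j, (i < n)%nat /\ (j < n)%nat /\ e i <> e j).
    { exists i, j. unfold e. repeat split; auto. lra. }
    pose proof (alzer_zeta n e Hn He Hne) as Z.
    assert (Z1 : zeta n e 1 = GM n x).
    { rewrite ElnG. unfold zeta, Sln, NN. f_equal. f_equal. apply rsum_ext. intros; unfold e; f_equal; ring. }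
    assert (Zm1 : zeta n e (-1) = GM' n x).
    { rewrite ElnG'. unfold zeta, Sln, NN. f_equal. f_equal. apply rsum_ext. intros; unfold e; f_equal. lra. }
    assert (Z0 : zeta n e 0 = 1/2).
    { unfold zeta, Sln, NN. rewrite (rsum_ext n _ (fun _ => ln (1/2))) by (intros; f_equal; ring).
      rewrite rsum_const. replace (INR n * ln (1/2) / INR n) with (ln (1/2)) by (field; lra).
      apply exp_ln; lra. }
    assert (F10 : F1 n e 0 = AM n x - 1/2).
    { unfold F1, S1, wf, NN. rewrite Z0.
      rewrite (rsum_ext n _ (fun i => 1 + (-2) * x i)) by (intros; unfold e; field).
      rewrite rsum_plus, rsum_scal, rsum_const. unfold AM. field. lra. }
    rewrite Z1, Zm1, F10 in Z. rewrite EA'. lra. }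
  assert (HAA' : AM n x < AM' n x) by (rewrite EA'; lra).
  apply final_abs; auto; try lra.
  all: rewrite ?EA' in *; try lra.
Qed.
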